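(* Let $\Gamma\subset\mathbb R^{n+1}$ be an open, convex, symmetric proper subcone with vertex at the origin containing $\Gamma^+$, and $f\in C^\infty(\Gamma)\cap C^0(\bar\Gamma)$ symmetric with $f_\ell=\partial f/\partial\lambda_\ell>0$ in $\Gamma$, $f$ concave in $\Gamma$, and $\sum_{\ell=1}^{n+1}f_\ell\lambda_\ell\ge-K_0(1+\sum_{\ell=1}^{n+1}f_\ell)$ for all $\lambda\in\Gamma$, for a constant $K_0$. Let $u$ be an admissible solution of $f(\lambda[\nabla^2u+\chi],-u_t)=\psi(x,t)$ in $M_T$, and at a point of $M_T$ let $\lambda=(\lambda_1,\dots,\lambda_n)=\lambda(U)$ be the eigenvalues of $U=\nabla^2u+\chi$, with $f_i=f_i(\lambda,-u_t)$ for $1\le i\le n$ and $f_\tau=f_{n+1}(\lambda,-u_t)$. Then for any index $1\le r\le n$ and any $\epsilon>0$, $$\sum_{i=1}^n f_i|\lambda_i|\le\epsilon\sum_{i\ne r}f_i\lambda_i^2+C\big(\epsilon,|u_t|,K_0,\sup_{M_T}\psi\big)\Big(1+\sum_{i=1}^n f_i+f_\tau\Big),$$ where the constant depends only on $\epsilon$, $|u_t|$, $K_0$, $\sup_{M_T}\psi$ (and $f$).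
   Context: $(M^n,g)$ is a compact Riemannian manifold with smooth boundary, $M_T=M\times(0,T]$, $\chi$ a smooth $(0,2)$-tensor, $\nabla^2u$ the spatial Hessian and $u_t$ the time derivative; eigenvalues are with respect to $g$. $\Gamma^+=\{\lambda\in\mathbb R^{n+1}:\lambda_\ell>0 \ \forall\ell\}$. $u$ admissible means $(\lambda[\nabla^2u+\chi],-u_t)\in\Gamma$ in $M_T$. *)

(* Defs.v *)
From HB Require Import structures.
From mathcomp Require Import all_boot all_order all_algebra all_fingroup.
From mathcomp Require Import all_classical all_reals all_analysis.
Set Implicit Arguments. Unset Strict Implicit. Unset Printing Implicit Defensive.
Import Order.TTheory GRing.Theory Num.Theory.
Import numFieldNormedType.Exports.
Local Open Scope classical_set_scope.
Local Open Scope ring_scope.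

(* Points of R^{n+1} are row vectors 'rV[R]_(n.+1); the coordinates
   0..n-1 are lambda_1..lambda_n and the last coordinate (ord_max) is
   the (n+1)-st one, i.e. -u_t. *)

Fixpoint Ck_on (R : realType) (m : nat) (k : nat) (A : set 'rV[R]_m)
    (f : 'rV[R]_m -> R) : Prop :=
  match k with
  | 0 => {within A, continuous f}
  | k'.+1 => (forall x, A x -> differentiable f x) /\
             (forall v : 'rV[R]_m, Ck_on k' A (fun x => 'D_v f x))
  end.

Definition smooth_on (R : realType) (m : nat) (A : set 'rV[R]_m)
    (f : 'rV[R]_m -> R) : Prop := forall k, Ck_on k A f.

Definition partial (R : realType) (m : nat) (f : 'rV[R]_m -> R) (l : 'I_m)
    (x : 'rV[R]_m) : R := 'D_(delta_mx 0 l) f x.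

Definition pos_cone (R : realType) (m : nat) : set 'rV[R]_m :=
  [set x | forall l, 0 < x 0 l].

Definition convex_set (R : realType) (m : nat) (A : set 'rV[R]_m) : Prop :=
  forall x y (t : R), A x -> A y -> 0 <= t <= 1 -> A (t *: x + (1 - t) *: y).

Definition is_cone (R : realType) (m : nat) (A : set 'rV[R]_m) : Prop :=
  forall x (t : R), A x -> 0 < t -> A (t *: x).

Definition sym_set (R : realType) (m : nat) (A : set 'rV[R]_m) : Prop :=
  forall (s : 'S_m) x, A x -> A (col_perm s x).

Definition sym_fun_on (R : realType) (m : nat) (A : set 'rV[R]_m)
    (f : 'rV[R]_m -> R) : Prop :=
  forall (s : 'S_m) x, A x -> f (col_perm s x) = f x.

Definition concave_on (R : realType) (m : nat) (A : set 'rV[R]_m)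
    (f : 'rV[R]_m -> R) : Prop :=
  forall x y (t : R), A x -> A y -> 0 <= t <= 1 ->
    t * f x + (1 - t) * f y <= f (t *: x + (1 - t) *: y).

Definition admissible_cone (R : realType) (m : nat) (G : set 'rV[R]_m) : Prop :=
  [/\ open G, convex_set G, is_cone G & sym_set G] /\
  G != setT /\ @pos_cone R m `<=` G.

Definition lam (R : realType) (n : nat) (x : 'rV[R]_n.+1) (i : 'I_n) : R :=
  x 0 (widen_ord (leqnSn n) i).

(* Main.v *)
Require Import Defs.
From HB Require Import structures.
From mathcomp Require Import all_boot all_order all_algebra all_fingroup.
From mathcomp Require Import all_classical all_reals all_analysis.
From mathcomp Require Import lra.
Import Order.TTheory GRing.Theory Num.Theory.
Import numFieldNormedType.Exports.
Local Open Scope classical_set_scope.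
Local Open Scope ring_scope.


Lemma grad_ineq (R: realType) m (f : 'rV[R]_m -> R) (G: set 'rV[R]_m) x y :
  G x -> G y -> concave_on G f -> differentiable f x ->
  f y - f x <= 'D_(y - x) f x.
Proof.
move=> Gx Gy cf df.
have dv := @diff_derivable _ _ _ f x (y - x) df.
rewrite /derive.
set q := (fun h : R => _).
have hr : q @ 0^'+ --> lim (q @ 0^').
  apply: cvg_trans dv => A /=. rewrite !nbhs_filterE /= => HA. rewrite /dnbhs /within /= in HA *. move: HA; apply: filterS => z Az zA.
  by apply: Az; rewrite gt_eqF.
apply: (cvgr_to_ge hr).
near=> h.
rewrite /q /=.
have h0 : 0 < h by near: h; exact: nbhs_right_gt.
have h1 : h <= 1 by near: h; exact: nbhs_right_le.
have := cf y x h Gy Gx.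
rewrite h1 ltW //= => /(_ isT) H.
have -> : h *: (y - x) + x = h *: y + (1 - h) *: x.
  by rewrite scalerBr scalerBl scale1r addrAC addrA.
rewrite -[X in _ <= X]/(h^-1 * _) ler_pdivlMl //. nra.
Unshelve. all: by end_near. Qed.

Lemma Dlin (R: realType) m (f : 'rV[R]_m -> R) x v :
  differentiable f x ->
  'D_v f x = \sum_(l < m) v 0 l * partial f l x.
Proof.
move=> df; rewrite /partial deriveE //.
under eq_bigr do rewrite deriveE //.
rewrite {1}(row_sum_delta v) linear_sum; apply: eq_bigr => l _.
by rewrite linearZ.
Qed.

Lemma amgm (R : realType) (eps a : R) : 0 < eps ->
  2 * `|a| <= eps * a ^+ 2 + eps^-1.
Proof.
move=> e0; rewrite -(real_normK (num_real a)); set t := `|a|.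
have ee : eps * eps^-1 = 1 by rewrite mulfV // gt_eqF.
have ei : 0 < eps^-1 by rewrite invr_gt0.
have : 0 <= eps^-1 * (eps * t - 1) ^+ 2 by rewrite mulr_ge0 ?sqr_ge0 // ltW.
nra.
Qed.

Theorem proposition2p3 (R : realType) (n : nat) (G : set 'rV[R]_n.+1)
  (f : 'rV[R]_n.+1 -> R) (K0 : R) :
  admissible_cone G ->
  smooth_on G f ->
  {within closure G, continuous f} ->
  sym_fun_on (closure G) f ->
  (forall x, G x -> forall l, 0 < partial f l x) ->
  concave_on G f ->
  (forall x, G x ->
     \sum_(l < n.+1) partial f l x * x 0 l
       >= - K0 * (1 + \sum_(l < n.+1) partial f l x)) ->
  forall (eps : R), 0 < eps ->
  forall (B Psi : R),
  exists C : R,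
  forall x : 'rV[R]_n.+1, G x ->
    `|x 0 ord_max| <= B ->  (* x 0 ord_max = - u_t, so |u_t| <= B *)
    f x <= Psi ->           (* f(lambda, -u_t) = psi <= sup psi *)
    forall r : 'I_n,
      \sum_(i < n) partial f (widen_ord (leqnSn n) i) x * `|lam x i|
      <= eps * \sum_(i < n | i != r)
                 partial f (widen_ord (leqnSn n) i) x * (lam x i) ^+ 2
         + C * (1 + \sum_(i < n) partial f (widen_ord (leqnSn n) i) x
                  + partial f ord_max x).
Proof.
move=> adm sm _ _ fpos cf K0h eps eps0 B Psi.
have [_ [_ posG]] := adm.
pose mu : 'rV[R]_n.+1 := const_mx 1.
have Gmu : G mu by apply: posG => l; rewrite mxE.
exists (`|Psi - f mu| + `|K0| + B + 1 + eps^-1).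
move=> x Gx xB fxP r.
have dfx : differentiable f x := (sm 1%N).1 x Gx.
have g := @grad_ineq _ _ f G x mu Gx Gmu cf dfx.
rewrite Dlin // in g.
have K := K0h x Gx.
set p := fun i : 'I_n => partial f (widen_ord (leqnSn n) i) x.
set pt := partial f ord_max x.
set Sn := \sum_(i < n) p i.
set Tn := \sum_(i < n) p i * lam x i.
have hS : \sum_(l < n.+1) partial f l x = Sn + pt by rewrite big_ord_recr.
have hT : \sum_(l < n.+1) partial f l x * x 0 l = Tn + pt * x 0 ord_max
  by rewrite big_ord_recr.
have hg : \sum_(l < n.+1) (mu - x) 0 l * partial f l x
   = (Sn + pt) - (Tn + pt * x 0 ord_max).
  rewrite -hS -hT -sumrB; apply: eq_bigr => l _.
  by rewrite !mxE mulrBl mul1r mulrC.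
rewrite hg in g; rewrite hS hT in K.
have pt0 : 0 < pt by apply: fpos.
have Sn0 : 0 <= Sn by apply: sumr_ge0 => i _; apply/ltW/fpos.
have B0 : 0 <= B by apply: le_trans xB.
have xm1 : `|x 0 ord_max| <= B := xB.
have /andP [xml xmr] : - B <= x 0 ord_max <= B by rewrite -ler_norml.
have ei : 0 < eps^-1 by rewrite invr_gt0.
have nK : K0 <= `|K0| := ler_norm K0.
have nP : Psi - f mu <= `|Psi - f mu| := ler_norm _.
have nK0 : 0 <= `|K0| := normr_ge0 _.
have nP0 : 0 <= `|Psi - f mu| := normr_ge0 _.
set Q := \sum_(i < n | i != r) p i * lam x i ^+ 2.
have [lr0 | lr0] := leP 0 (lam x r).
-
  have hA : \sum_(i < n) p i * `|lam x i| <=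
     \sum_(i < n) (p i * lam x i + eps * (if i != r then p i * lam x i ^+ 2 else 0)
                   + p i * eps^-1).
    apply: ler_sum => i _.
    have pi0 : 0 < p i by apply: fpos.
    have am := @amgm _ eps (lam x i) eps0.
    have hl : `|lam x i| - lam x i <= 2 * `|lam x i|.
      have := ler_norm (- lam x i); rewrite normrN; lra.
    case: eqP => [e | _] /=.
      subst i; rewrite ger0_norm //; nra.
    nra.
  apply: (le_trans hA).
  rewrite !big_split /= -mulr_sumr -mulr_suml -big_mkcond /= -/Tn -/Sn -/Q.
  nra.
-
  have hB : \sum_(i < n) p i * `|lam x i| <=
     \sum_(i < n) (- (p i * lam x i) + eps * (if i != r then p i * lam x i ^+ 2 else 0)
                   + p i * eps^-1).
    apply: ler_sum => i _.
    have pi0 : 0 < p i by apply: fpos.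
    have am := @amgm _ eps (lam x i) eps0.
    have hl : `|lam x i| + lam x i <= 2 * `|lam x i|.
      have := ler_norm (lam x i); lra.
    case: eqP => [e | _] /=.
      subst i; rewrite ltr0_norm //; nra.
    nra.
  apply: (le_trans hB).
  rewrite !big_split /= sumrN -mulr_sumr -mulr_suml -big_mkcond /= -/Tn -/Sn -/Q.
  nra.
Qed.
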